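(* Let $f:\Sigma^\ast\to\Sigma^\ast$ be a total rational function, let $\sim_R$ be a left congruence of finite index with $\sim_R\sqsubseteq\sim_{R_0}$, and let $L^R$ be the left automaton of the canonical bimachine $B^R$. Then $\sim_{L^0}\sqsubseteq\sim_{L^R}$, where $L^0=L^{R_0}$.
   Context: For words $u,v$, $u\wedge v$ denotes their longest common prefix, $\bigwedge X$ the longest common prefix of a nonempty set $X$, and $\lVert u,v\rVert=|u|+|v|-2|u\wedge v|$. The left syntactic congruence: $u\sim_{R_0}v$ iff for all $w$, $wu\in\mathrm{dom}(f)\Leftrightarrow wv\in\mathrm{dom}(f)$ and $\sup\{\lVert f(wu),f(wv)\rVert: wu\in\mathrm{dom}f\}<\infty$. For a left congruence $\sim_R$ of finite index finer than $\sim_{R_0}$, let $R=\Sigma^\ast/\sim_R$, $r_0=[\varepsilon]$, and for $r=[u]$, $\sigma r=[\sigma u]$ (this is the right automaton of $B^R$). For $r\in R$ and $u\in\Sigma^\ast$ put $\widehat f_r(u)=\bigwedge\{f(uv): v\in r, uv\in\mathrm{dom}(f)\}$ (defined when this set is nonempty). Define the right congruence $u\sim_{L^R}v$ iff for all $\sigma\in\Sigma$, $w\in\Sigma^\ast$, $r\in R$: $\widehat f_{\sigma r}(uw)^{-1}\widehat f_r(uw\sigma)=\widehat f_{\sigma r}(vw)^{-1}\widehat f_r(vw\sigma)$ and $\widehat f_{r_0}(uw)^{-1}f(uw)=\widehat f_{r_0}(vw)^{-1}f(vw)$, whenever these expressions are defined. $L^R$ is the deterministic left automaton $(\Sigma^\ast/\sim_{L^R},[\varepsilon],[u]\xrightarrow{\sigma}[u\sigma])$;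 it is the left automaton of a bimachine $B^R$ with right automaton $R$ defining $f$. $L^0$ denotes $L^{R_0}$ (taking $\sim_R=\sim_{R_0}$). For a deterministic automaton $A$ with initial state $q_0$, $u\sim_A v$ iff $A$ reaches the same states from $q_0$ on $u$ and on $v$ (so $\sim_{L^R}$ is the congruence defining $L^R$). $\sim_1\sqsubseteq\sim_2$ means $u\sim_1v\Rightarrow u\sim_2v$. *)

(* Defs.v *)
From mathcomp Require Import all_boot.
From Stdlib Require Import ClassicalEpsilon.
Set Implicit Arguments. Unset Strict Implicit. Unset Printing Implicit Defensive.

Section Words.
Variable S : finType.

Fixpoint lcp2 (u v : seq S) : seq S :=
  match u, v with
  | a :: u', b :: v' => if a == b then a :: lcp2 u' v' else [::]
  | _, _ => [::]
  end.

Definition wdist (u v : seq S) : nat := size u + size v - 2 * size (lcp2 u v).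

Definition is_prefix (p y : seq S) : Prop := exists z, y = p ++ z.

Definition is_lcp (P : seq S -> Prop) (p : seq S) : Prop :=
  (forall y, P y -> is_prefix p y) /\
  (forall q, (forall y, P y -> is_prefix q y) -> is_prefix q p).

Definition bigwedge (P : seq S -> Prop) : seq S :=
  epsilon (inhabits [::]) (is_lcp P).

Definition lquot (a b : seq S) : option (seq S) :=
  if take (size a) b == a then Some (drop (size a) b) else None.

(** Nondeterministic real-time finite transducers with final outputs,
    states 'I_n. A transition (p, a, w, q) reads letter a, outputs w. *)
Record transducer := Transducer {
  tn : nat;
  tinit : seq 'I_tn;
  ttrans : seq ('I_tn * S * seq S * 'I_tn);
  tfinal : seq ('I_tn * seq S) }.

Inductive trun (T : transducer) : 'I_(tn T) -> seq S -> seq S -> 'I_(tn T) -> Prop :=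
  | trun_nil p : trun p [::] [::] p
  | trun_cons p a w q u y r :
      (p, a, w, q) \in ttrans T -> trun q u y r -> trun p (a :: u) (w ++ y) r.

Definition taccepts (T : transducer) (u y : seq S) : Prop :=
  exists p q y1 yf, p \in tinit T /\ trun p u y1 q /\ (q, yf) \in tfinal T
                    /\ y = y1 ++ yf.

Definition total_rational (f : seq S -> seq S) : Prop :=
  exists T : transducer, forall u y, taccepts T u y <-> y = f u.

Variable f : seq S -> seq S.

(** left syntactic congruence ~R0 (f total, so the domain conditions are trivial) *)
Definition simR0 (u v : seq S) : Prop :=
  exists B : nat, forall w, wdist (f (w ++ u)) (f (w ++ v)) <= B.

Definition left_congruence_fi (R : seq S -> seq S -> Prop) : Prop :=
  (forall u, R u u) /\ (forall u v, R u v -> R v u) /\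
  (forall u v w, R u v -> R v w -> R u w) /\
  (forall a u v, R u v -> R (a :: u) (a :: v)) /\
  (exists reps : seq (seq S), forall u, exists2 x, x \in reps & R u x).

(** hat f_r(u), with the class r = [x] given by a representative x *)
Definition hatf (R : seq S -> seq S -> Prop) (x u : seq S) : seq S :=
  bigwedge (fun y => exists v, R v x /\ y = f (u ++ v)).

(** the right congruence ~_{L^R}; r = [x], sigma r = [sigma x], r0 = [eps] *)
Definition simL (R : seq S -> seq S -> Prop) (u v : seq S) : Prop :=
  (forall (a : S) (w x : seq S),
      lquot (hatf R (a :: x) (u ++ w)) (hatf R x (u ++ w ++ [:: a])) =
      lquot (hatf R (a :: x) (v ++ w)) (hatf R x (v ++ w ++ [:: a]))) /\
  (forall w : seq S,
      lquot (hatf R [::] (u ++ w)) (f (u ++ w)) =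
      lquot (hatf R [::] (v ++ w)) (f (v ++ w))).

End Words.

(* Main.v *)
Require Import Defs.
From mathcomp Require Import all_boot zify.
From Stdlib Require Import Classical ClassicalEpsilon.

Section Aux.
Variable S : finType.
Implicit Types (P Q : seq S -> Prop) (p q y c a b u v w z : seq S).

Lemma lcp_exists P y0 : P y0 -> exists p, is_lcp P p.
Proof.
elim: y0 P => [|a y0 IH] P Hy0.
  exists [::]; split; first by move=> y _; exists y.
  by move=> q Hq; exact: Hq _ Hy0.
case: (classic (forall y, P y -> exists y', y = a :: y')) => [Hall|Hn].
  have [p [H1 H2]] := IH (fun y => P (a :: y)) Hy0.
  exists (a :: p); split.
    move=> y Py; have [y' Ey] := Hall y Py; subst y.
    by have [z ->] := H1 y' Py; exists z.
  move=> [|b q'] Hq; first by exists (a :: p).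
  have [z /= [Eb _]] := Hq _ Hy0; subst b.
  have [s ->] : is_prefix q' p.
    apply: H2 => y Py; have [z' /= [Ez]] := Hq _ Py; by exists z'.
  by exists s.
have [y Hy] := not_all_ex_not _ _ Hn.
have [Py Hny] := imply_to_and _ _ Hy.
exists [::]; split; first by move=> y1 _; exists y1.
move=> [|b q'] Hq; first by exists [::].
have [z /= [Eb _]] := Hq _ Hy0; subst b.
have [z' Ez] := Hq _ Py; by case: Hny; exists (q' ++ z').
Qed.

Lemma bigwedge_spec P y0 : P y0 -> is_lcp P (bigwedge P).
Proof. move=> H; apply: epsilon_spec; exact: lcp_exists H. Qed.

Lemma prefix_antisym p q : is_prefix p q -> is_prefix q p -> p = q.
Proof.
move=> [z Ez] [z' Ez'].
have : size z = 0 by move: (congr1 size Ez) (congr1 size Ez'); rewrite !size_cat; lia.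
by move/eqP; rewrite size_eq0 => /eqP Hz; rewrite Ez Hz cats0.
Qed.

Lemma lcp_unique P p q : is_lcp P p -> is_lcp P q -> p = q.
Proof.
move=> [H1 H2] [K1 K2]; apply: prefix_antisym; [apply: K2 | apply: H2]; by [].
Qed.

Lemma lcp_ext P Q p : (forall y, P y <-> Q y) -> is_lcp P p -> is_lcp Q p.
Proof.
move=> E [H1 H2]; split; first by move=> y /E; apply: H1.
move=> q Hq; apply: H2 => y /E; exact: Hq.
Qed.

Lemma cat_inj c a b : c ++ a = c ++ b -> a = b.
Proof. by elim: c => //= x c IH [] /IH. Qed.

Lemma prefix_cat_split (q c z : seq S) :
  is_prefix q (c ++ z) -> is_prefix q c \/ exists q', q = c ++ q'.
Proof.
elim: c q => [|a c IH] q Hq; first by right; exists q.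
case: q Hq => [|b q'] Hq; first by left; exists (a :: c).
have [t /= [Eb Et]] := Hq; subst b.
have [[s Es]|[q'' ->]] := IH q' (ex_intro _ t Et).
  by left; exists s; rewrite Es.
by right; exists q''.
Qed.

Lemma lcp_cat P p c z0 : P z0 -> is_lcp P p ->
  is_lcp (fun y => exists z, P z /\ y = c ++ z) (c ++ p).
Proof.
move=> Pz0 [H1 H2]; split.
  by move=> y [z [Pz ->]]; have [t ->] := H1 z Pz; exists t; rewrite catA.
move=> q Hq.
have [[t Ec]|[q' Eq]] := prefix_cat_split q c z0 (Hq (c ++ z0) (ex_intro _ z0 (conj Pz0 erefl))).
  by exists (t ++ p); rewrite Ec catA.
subst q.
have [s ->] : is_prefix q' p.
  apply: H2 => y Py.
  have [t Et] := Hq _ (ex_intro _ y (conj Py erefl)).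
  by exists t; apply: (@cat_inj c); rewrite Et catA.
by exists s; rewrite catA.
Qed.

Lemma lcp_sub P Q p q y0 : (forall y, P y -> Q y) -> P y0 ->
  is_lcp P p -> is_lcp Q q -> is_prefix q p.
Proof. move=> PQ _ [H1 H2] [K1 K2]; apply: H2 => y /PQ; exact: K1. Qed.

Lemma bigwedge_ext P Q y0 : P y0 -> (forall y, P y <-> Q y) -> bigwedge P = bigwedge Q.
Proof.
move=> Py E; apply: (@lcp_unique Q); last by apply: (@bigwedge_spec Q y0); apply/E.
apply: lcp_ext E _; exact: bigwedge_spec Py.
Qed.

Lemma take_cat_size c n b : take (size c + n) (c ++ b) = c ++ take n b.
Proof. by elim: c => //= x c ->. Qed.
Lemma drop_cat_size c n b : drop (size c + n) (c ++ b) = drop n b.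
Proof. by elim: c. Qed.

Lemma lquot_cat c a b : lquot (c ++ a) (c ++ b) = lquot a b.
Proof.
rewrite /lquot size_cat take_cat_size drop_cat_size eqseq_cat // eqxx.
done.
Qed.

Lemma lquot_pre a b : lquot a (a ++ b) = Some b.
Proof.
have := lquot_cat a (Nil S) b; rewrite cats0 => ->.
by rewrite /lquot /= take0 drop0.
Qed.

Lemma lquot_some a b c : lquot a b = Some c -> b = a ++ c.
Proof.
rewrite /lquot; case: eqP => // E [<-].
by rewrite -{1}(cat_take_drop (size a) b) E.
Qed.

Definition m (a b : seq S) := size (lcp2 a b).

Lemma lcp2_sym a b : lcp2 a b = lcp2 b a.
Proof.
elim: a b => [|x a IH] [|y b] //=.
case: eqP => [->|ne]; first by rewrite eqxx IH.
by case: eqP => // E; case: ne.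
Qed.

Lemma lcp2_refl a : lcp2 a a = a.
Proof. by elim: a => //= x a ->; rewrite eqxx. Qed.

Lemma m_le a b : m a b <= size a /\ m a b <= size b.
Proof.
rewrite /m; elim: a b => [|x a IH] [|y b] //=.
case: eqP => _ //=; have := IH b; lia.
Qed.

Lemma m_tri a b c : minn (m a b) (m b c) <= m a c.
Proof.
rewrite /m; elim: a b c => [|x a IH] [|y b] [|z c] //=; try by rewrite ?minn0 ?min0n.
case: (x =P y) => [<-|_] /=; last by rewrite min0n.
case: (x == z) => /=; last by rewrite minn0.
have := IH b c; lia.
Qed.

Lemma wdist_tri a b c : wdist a c <= wdist a b + wdist b c.
Proof.
rewrite /wdist -/(m a b) -/(m b c) -/(m a c).
have := m_tri a b c; have := m_le a b; have := m_le b c; have := m_le a c; lia.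
Qed.

Lemma wdist_sym a b : wdist a b = wdist b a.
Proof. by rewrite /wdist lcp2_sym addnC. Qed.

Variable f : seq S -> seq S.

Lemma R0_refl u : simR0 f u u.
Proof. exists 0 => w; rewrite /wdist lcp2_refl; lia. Qed.
Lemma R0_sym u v : simR0 f u v -> simR0 f v u.
Proof. by move=> [B H]; exists B => w; rewrite wdist_sym. Qed.
Lemma R0_trans u v w : simR0 f u v -> simR0 f v w -> simR0 f u w.
Proof.
move=> [B1 H1] [B2 H2]; exists (B1 + B2) => x.
apply: leq_trans (wdist_tri _ (f (x ++ v)) _) _; exact: leq_add.
Qed.
Lemma R0_cons (x : S) u v : simR0 f u v -> simR0 f (x :: u) (x :: v).
Proof. by move=> [B H]; exists B => w; have := H (w ++ [:: x]); rewrite -!catA. Qed.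

Notation H0 := (hatf f (simR0 f)).

Lemma simL_ext (R : seq S -> seq S -> Prop) u v w0 :
  simL f R u v -> simL f R (u ++ w0) (v ++ w0).
Proof.
move=> [H1 H2]; split.
  by move=> a w x; have := H1 a (w0 ++ w) x; rewrite -!catA.
by move=> w; have := H2 (w0 ++ w); rewrite -!catA.
Qed.

Lemma H0_spec x p : is_lcp (fun y => exists v, simR0 f v x /\ y = f (p ++ v)) (H0 x p).
Proof. apply: (@bigwedge_spec _ (f (p ++ x))); exists x; split => //; exact: R0_refl. Qed.

Lemma H0_class x v p : simR0 f v x -> H0 v p = H0 x p.
Proof.
move=> Hvx; apply: (@bigwedge_ext _ _ (f (p ++ v))).
  by exists v; split => //; exact: R0_refl.
move=> y; split=> [[v' [Hv' ->]]|[v' [Hv' ->]]]; exists v'; split => //.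
  exact: R0_trans Hv' Hvx.
apply: R0_trans Hv' _; exact: R0_sym.
Qed.
Lemma H0_step (a : S) x p : is_prefix (H0 (a :: x) p) (H0 x (p ++ [:: a])).
Proof.
apply: (@lcp_sub (fun y => exists v, simR0 f v x /\ y = f ((p ++ [:: a]) ++ v))
  (fun y => exists v, simR0 f v (a :: x) /\ y = f (p ++ v)) _ _ (f ((p ++ [:: a]) ++ x))
  _ _ (H0_spec x _) (H0_spec _ _)).
  move=> y [v [Hv ->]]; exists (a :: v); split; first exact: R0_cons.
  by rewrite -catA cat1s.
by exists x; split => //; exact: R0_refl.
Qed.

Lemma key u v : simL f (simR0 f) u v -> forall v',
  exists Z, f (u ++ v') = H0 v' u ++ Z /\ f (v ++ v') = H0 v' v ++ Z.
Proof.
move=> H v'; elim: v' u v H => [|a v'' IH] u v H.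
  have [g Eg] : is_prefix (H0 [::] u) (f (u ++ [::])).
    by apply: (H0_spec [::] u).1; exists [::]; split => //; exact: R0_refl.
  exists g; split => //.
  have := H.2 [::]; rewrite !cats0 in Eg *; rewrite Eg lquot_pre.
  by move/esym/lquot_some.
have [Z [E1 E2]] := IH (u ++ [:: a]) (v ++ [:: a]) (simL_ext _ _ _ _ H).
have [q Eq] := H0_step a v'' u.
have := H.1 a [::] v''; rewrite cat0s !cats0 Eq lquot_pre => /esym/lquot_some Eq'.
rewrite -catA cat1s in E1; rewrite -catA cat1s in E2.
exists (q ++ Z); split.
  by rewrite E1 Eq -catA.
by rewrite E2 Eq' -catA.
Qed.

Lemma decomp_side (R : seq S -> seq S -> Prop) x p (T : seq S -> Prop) z0 :
  T z0 ->
  (forall z, T z -> exists v', R v' x /\ f (p ++ v') = H0 x p ++ z) ->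
  (forall v', R v' x -> exists z, T z /\ f (p ++ v') = H0 x p ++ z) ->
  R x x ->
  hatf f R x p = H0 x p ++ bigwedge T.
Proof.
move=> T0 HT1 HT2 Rxx.
apply: (@lcp_unique (fun y => exists v', R v' x /\ y = f (p ++ v'))).
  by apply: (@bigwedge_spec _ (f (p ++ x))); exists x.
apply: (lcp_ext _ _ _ _ (lcp_cat _ _ (H0 x p) _ T0 (bigwedge_spec _ _ T0))).
move=> y; split.
  by move=> [z [/HT1 [v' [Rv E]] ->]]; exists v'; rewrite E.
by move=> [v' [Rv ->]]; have [z [Tz E]] := HT2 v' Rv; exists z.
Qed.

Lemma decomp (R : seq S -> seq S -> Prop) p p' :
  (forall u, R u u) -> (forall u v, R u v -> simR0 f u v) ->
  simL f (simR0 f) p p' -> forall x,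
  exists L, hatf f R x p = H0 x p ++ L /\ hatf f R x p' = H0 x p' ++ L.
Proof.
move=> Rrefl Hsub H x.
pose T := fun z => exists v', R v' x /\ f (p ++ v') = H0 x p ++ z /\ f (p' ++ v') = H0 x p' ++ z.
have [Z0 [Z1 Z2]] := key _ _ H x.
have T0 : T Z0 by exists x.
have HT2 : forall v', R v' x -> exists z, T z /\ f (p ++ v') = H0 x p ++ z /\ f (p' ++ v') = H0 x p' ++ z.
  move=> v' Rv; have [Z [E1 E2]] := key _ _ H v'.
  rewrite !(H0_class _ _ _ (Hsub _ _ Rv)) in E1 E2.
  by exists Z; split => //; exists v'.
exists (bigwedge T); split.
  apply: (decomp_side _ _ _ _ _ T0) => //.
    by move=> z [v' [Rv [E _]]]; exists v'.
  by move=> v' /HT2 [z [Tz [E _]]]; exists z.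
apply: (decomp_side _ _ _ _ _ T0) => //.
  by move=> z [v' [Rv [_ E]]]; exists v'.
by move=> v' /HT2 [z [Tz [_ E]]]; exists z.
Qed.

Lemma main_aux (R : seq S -> seq S -> Prop) :
  (forall u, R u u) -> (forall u v, R u v -> simR0 f u v) ->
  forall u v, simL f (simR0 f) u v -> simL f R u v.
Proof.
move=> Rrefl Hsub u v Hu; split.
  move=> a w x.
  have H01 := simL_ext _ _ _ w Hu.
  have H02 := simL_ext _ _ _ [:: a] H01.
  have [L1 [A1 B1]] := decomp _ _ _ Rrefl Hsub H01 (a :: x).
  have [L2 [A2 B2]] := decomp _ _ _ Rrefl Hsub H02 x.
  have [q Eq] := H0_step a x (u ++ w).
  have := H01.1 a [::] x; rewrite cat0s !cats0 Eq lquot_pre => /esym/lquot_some Eq'.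
  rewrite !catA A1 B1 A2 B2 Eq Eq' -!catA !lquot_cat; done.
move=> w.
have H01 := simL_ext _ _ _ w Hu.
have [L0 [A0 B0]] := decomp _ _ _ Rrefl Hsub H01 [::].
have [Z [E1 E2]] := key _ _ H01 [::].
rewrite !cats0 in E1 E2.
by rewrite A0 B0 E1 E2 !lquot_cat.
Qed.

End Aux.

Theorem mainTheorem13 (S : finType) (f : seq S -> seq S)
  (R : seq S -> seq S -> Prop) :
  total_rational f ->
  left_congruence_fi R ->
  (forall u v, R u v -> simR0 f u v) ->
  forall u v, simL f (simR0 f) u v -> simL f R u v.
Proof.
move=> _ [Rrefl _] Hsub; exact: main_aux.
Qed.
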